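(* Let $F$ be an algebraically closed field of characteristic $0$ and let $\hat{\mathbb{Z}}$ be the profinite completion of $\mathbb{Z}$. Suppose $$0\to\hat{\mathbb{Z}}\overset{i_H}{\to} H\overset{\mathrm{ex}_H}{\to}F^{\times}\to1\quad\text{and}\quad 0\to\hat{\mathbb{Z}}\overset{i_G}{\to} G\overset{\mathrm{ex}_G}{\to}F^{\times}\to1$$ are exact sequences of abelian groups, where $H$ and $G$ are divisible torsion-free abelian groups. Then there is a group isomorphism $\sigma:H\to G$ such that $\mathrm{ex}_H=\mathrm{ex}_G\circ\sigma$. *)

(* Defs.v *)
From HB Require Import structures.
From mathcomp Require Import all_boot all_order all_algebra.
From mathcomp Require Import boolp.

Set Implicit Arguments.
Unset Strict Implicit.
Unset Printing Implicit Defensive.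

Import Order.TTheory GRing.Theory Num.Theory.
Local Open Scope ring_scope.

(* The profinite completion of Z:  Zhat = lim_{n >= 1} Z / nZ.               *)
(* An element is a compatible family (x_n)_n, where coordinate n lives in    *)
(* Z/(n+1)Z and is represented by its canonical residue in [0, n+1), and     *)
(* compatibility says x_m = x_n mod (m+1) whenever (m+1) | (n+1).            *)

Definition zhat_compat (x : nat -> int) : Prop :=
  (forall n, x n = (x n %% n.+1%:Z)%Z) /\
  (forall m n, (m.+1 %| n.+1)%N -> x m = (x n %% m.+1%:Z)%Z).

Record Zhat := MkZhat { zhat_val : nat -> int; zhat_valP : zhat_compat zhat_val }.

HB.instance Definition _ := gen_eqMixin Zhat.
HB.instance Definition _ := gen_choiceMixin Zhat.

Lemma zhat_eq (x y : Zhat) : zhat_val x =1 zhat_val y -> x = y.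
Proof.
case: x => x hx; case: y => y hy /= /funext exy.
subst y; congr MkZhat; exact: Prop_irrelevance.
Qed.

Lemma modz_dvd_nested (m n d : int) : (d %| n)%Z -> ((m %% n)%Z %% d)%Z = (m %% d)%Z.
Proof.
move=> dn; apply/eqP; rewrite eqz_mod_dvd.
have -> : ((m %% n)%Z - m = - ((m %/ n)%Z * n))%R.
  by rewrite {2}(divz_eq m n) opprD addrCA subrr addr0.
by rewrite rpredN; apply: dvdz_mull.
Qed.

Lemma zhat_dvd (m n : nat) : (m.+1 %| n.+1)%N -> (m.+1%:Z %| n.+1%:Z)%Z.
Proof. by []. Qed.

Definition zhat0_fun : nat -> int := fun _ => 0.
Lemma zhat0_compat : zhat_compat zhat0_fun.
Proof. by split=> *; rewrite /zhat0_fun mod0z. Qed.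
Definition zhat0 : Zhat := MkZhat zhat0_compat.

Definition zhat_opp_fun (x : Zhat) : nat -> int :=
  fun n => ((- zhat_val x n) %% n.+1%:Z)%Z.
Lemma zhat_opp_compat x : zhat_compat (zhat_opp_fun x).
Proof.
case: x => x [h1 h2]; rewrite /zhat_opp_fun /=; split=> [n|m n mn].
  by rewrite modz_mod.
rewrite modz_dvd_nested //; rewrite (h2 _ _ mn).
by apply/eqP; rewrite modzNm.
Qed.
Definition zhat_opp (x : Zhat) : Zhat := MkZhat (zhat_opp_compat x).

Definition zhat_add_fun (x y : Zhat) : nat -> int :=
  fun n => ((zhat_val x n + zhat_val y n) %% n.+1%:Z)%Z.
Lemma zhat_add_compat x y : zhat_compat (zhat_add_fun x y).
Proof.
case: x => x [h1 h2]; case: y => y [k1 k2]; rewrite /zhat_add_fun /=.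
split=> [n|m n mn]; first by rewrite modz_mod.
rewrite modz_dvd_nested // (h2 _ _ mn) (k2 _ _ mn).
by apply/eqP; rewrite modzDm.
Qed.
Definition zhat_add (x y : Zhat) : Zhat := MkZhat (zhat_add_compat x y).

Lemma zhat_addA : associative zhat_add.
Proof.
move=> x y z; apply: zhat_eq => n /=; rewrite /zhat_add_fun /=.
by apply/eqP; rewrite modzDml modzDmr addrA.
Qed.

Lemma zhat_addC : commutative zhat_add.
Proof. by move=> x y; apply: zhat_eq => n /=; rewrite /zhat_add_fun addrC. Qed.

Lemma zhat_add0 : left_id zhat0 zhat_add.
Proof.
move=> [x [h1 h2]]; apply: zhat_eq => n /=; rewrite /zhat_add_fun /= /zhat0_fun.
by rewrite add0r -h1.
Qed.

Lemma zhat_addN : left_inverse zhat0 zhat_opp zhat_add.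
Proof.
move=> x; apply: zhat_eq => n /=; rewrite /zhat_add_fun /zhat_opp_fun /zhat0_fun /=.
by apply/eqP; rewrite modzDml addNr mod0z.
Qed.

HB.instance Definition _ :=
  GRing.isZmodule.Build Zhat zhat_addA zhat_addC zhat_add0 zhat_addN.

Definition divisible_group (A : zmodType) : Prop :=
  forall (a : A) (n : nat), (0 < n)%N -> exists b : A, b *+ n = a.

Definition torsion_free_group (A : zmodType) : Prop :=
  forall (a : A) (n : nat), (0 < n)%N -> a *+ n = 0 -> a = 0.

(* A short exact sequence of abelian groups
     0 -> Zhat --i--> A --ex--> F^x -> 1
   where F^x is the multiplicative group of nonzero elements of the field F,
   so ex is a group homomorphism from (A, +) to (F^x, times). *)
Definition ses_Zhat_units (F : fieldType) (A : zmodType)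
    (i : Zhat -> A) (ex : A -> F) : Prop :=
  [/\
      (forall x y : Zhat, i (x + y) = i x + i y) /\ injective i,
      (forall a : A, ex a != 0),
      (forall a b : A, ex (a + b) = ex a * ex b),
      (forall a : A, ex a = 1 <-> exists x : Zhat, i x = a) &
      (forall y : F, y != 0 -> exists a : A, ex a = y)].

(* Main.v *)
Require Import Defs.
From HB Require Import structures.
From mathcomp Require Import all_boot all_order all_algebra.
From mathcomp Require Import zify boolp classical_sets.
Import GRing.Theory Num.Theory.
Set Implicit Arguments.
Unset Strict Implicit.
Local Open Scope ring_scope.


Lemma zval_add (x y : Zhat) k :
  zhat_val (x + y) k = ((zhat_val x k + zhat_val y k) %% k.+1%:Z)%Z.
Proof. by []. Qed.

Lemma zval_mod (x : Zhat) k : zhat_val x k = (zhat_val x k %% k.+1%:Z)%Z.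
Proof. by case: x => x [h1 h2]; exact: h1. Qed.

Lemma zval_compat (x : Zhat) m n : (m.+1 %| n.+1)%N ->
  zhat_val x m = (zhat_val x n %% m.+1%:Z)%Z.
Proof. by case: x => x [h1 h2]; exact: h2. Qed.

Lemma zval0 k : zhat_val 0 k = 0.
Proof. by []. Qed.

Lemma zval_muln (x : Zhat) m k :
  zhat_val (x *+ m) k = ((zhat_val x k * m%:Z) %% k.+1%:Z)%Z.
Proof.
elim: m => [|m IH]; first by rewrite mulr0n zval0 mulr0 mod0z.
rewrite mulrS zval_add IH; apply/eqP.
by rewrite modzDmr (intS m) mulrDr mulr1.
Qed.

Definition zn_fun (r : nat) : nat -> int := fun k => (r%:Z %% k.+1%:Z)%Z.
Lemma zn_compat r : zhat_compat (zn_fun r).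
Proof.
split=> [n|m n mn]; rewrite /zn_fun; first by rewrite modz_mod.
by rewrite modz_dvd_nested.
Qed.
Definition zn r : Zhat := MkZhat (zn_compat r).

Lemma zval_zn r k : zhat_val (zn r) k = (r%:Z %% k.+1%:Z)%Z.
Proof. by []. Qed.

Lemma zn_add a b : zn (a + b) = zn a + zn b.
Proof.
apply: zhat_eq => k; rewrite zval_add !zval_zn; apply/eqP.
by rewrite modzDm PoszD.
Qed.

Lemma zn_mul a M : zn (a * M) = zn a *+ M.
Proof.
apply: zhat_eq => k; rewrite zval_muln !zval_zn; apply/eqP.
by rewrite modzMml PoszM.
Qed.

Lemma zval_sub (x y : Zhat) k :
  zhat_val (x - y) k = ((zhat_val x k - zhat_val y k) %% k.+1%:Z)%Z.
Proof.
rewrite zval_add /=/zhat_opp_fun; apply/eqP.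
by rewrite modzDmr.
Qed.

Definition idx (n k : nat) := (n.+1 * k.+1).-1.
Lemma idxS n k : (idx n k).+1 = (n.+1 * k.+1)%N.
Proof. by rewrite /idx prednK // muln_gt0. Qed.

Lemma zdvd_idx (w : Zhat) n k : zhat_val w n = 0 ->
  (n.+1%:Z %| zhat_val w (idx n k))%Z.
Proof.
move=> w0; have := @zval_compat w n (idx n k); rewrite idxS dvdn_mulr // => /(_ isT).
by rewrite w0 => /esym; move/dvdz_mod0P.
Qed.

Lemma zdiv_fun_compat (w : Zhat) n :
  zhat_val w n = 0 ->
  zhat_compat (fun k => ((zhat_val w (idx n k) %/ n.+1%:Z)%Z %% k.+1%:Z)%Z).
Proof.
move=> w0; split=> [k|j k jk]; first by rewrite modz_mod.
rewrite modz_dvd_nested //.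
have := @zval_compat w (idx n j) (idx n k); rewrite !idxS dvdn_pmul2l // => /(_ jk).
have := @zdvd_idx w n k w0; move=> /divzK.
set q := (zhat_val w (idx n k) %/ _)%Z => Ek.
rewrite -Ek PoszM mulrC -mulz_modr // => ->.
by rewrite mulKz // modz_mod.
Qed.

Definition zdiv (w : Zhat) n (w0 : zhat_val w n = 0) : Zhat :=
  MkZhat (@zdiv_fun_compat w n w0).

Lemma zdivP (w : Zhat) n (w0 : zhat_val w n = 0) : @zdiv w n w0 *+ n.+1 = w.
Proof.
apply: zhat_eq => k; rewrite zval_muln /=.
rewrite modzMml divzK; last exact: zdvd_idx.
by rewrite (@zval_compat w k (idx n k)) // idxS dvdn_mull.
Qed.

Lemma zhat_div_exists (w : Zhat) n : zhat_val w n = 0 -> exists v, v *+ n.+1 = w.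
Proof. by move=> w0; exists (@zdiv w n w0); exact: zdivP. Qed.

Lemma small_diff (n r r' : nat) (q : int) : (r < n.+1)%N -> (r' < n.+1)%N ->
  (r%:Z - r'%:Z) = q * (n.+1)%:Z -> r = r'.
Proof.
move=> h1 h2 hq.
have [q0|[q0|q0]] : q = 0 \/ (1 <= q \/ q <= -1) by lia.
- by move: hq; rewrite q0 mul0r => /eqP; rewrite subr_eq0 => /eqP [].
- have : (n.+1%:Z <= q * n.+1%:Z) by rewrite ler_peMl.
  lia.
- have : (q * n.+1%:Z <= - n.+1%:Z).
    by rewrite -mulN1r ler_wpM2r.
  lia.
Qed.

Section Generic.
Variables (F : fieldType) (A : zmodType) (iA : Zhat -> A) (exA : A -> F).
Hypotheses (sesA : ses_Zhat_units iA exA) (divA : divisible_group A)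
  (tfA : torsion_free_group A).

Lemma iD x y : iA (x + y) = iA x + iA y.
Proof. by case: sesA => [[]]. Qed.
Lemma i_inj : injective iA.
Proof. by case: sesA => [[]]. Qed.
Lemma i0 : iA 0 = 0.
Proof. by apply: (addrI (iA 0)); rewrite -iD !addr0. Qed.
Lemma iN x : iA (- x) = - iA x.
Proof. by apply/eqP; rewrite -subr_eq0 opprK -iD addNr i0. Qed.
Lemma iB x y : iA (x - y) = iA x - iA y.
Proof. by rewrite iD iN. Qed.
Lemma i_muln x m : iA (x *+ m) = iA x *+ m.
Proof. by elim: m => [|m IH]; rewrite ?mulr0n ?i0 // !mulrS iD IH. Qed.

Lemma ex_neq0 a : exA a != 0.
Proof. by case: sesA. Qed.
Lemma exD a b : exA (a + b) = exA a * exA b.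
Proof. by case: sesA. Qed.
Lemma ex_ker a : exA a = 1 <-> exists x, iA x = a.
Proof. by case: sesA => _ _ _ h _; exact: h. Qed.
Lemma ex_surj y : y != 0 -> exists a, exA a = y.
Proof. by case: sesA => _ _ _ _ h; exact: h. Qed.
Lemma ex0 : exA 0 = 1.
Proof.
have := exD 0 0; rewrite addr0 => h.
by apply: (mulfI (ex_neq0 0)); rewrite mulr1 -h.
Qed.
Lemma exN a : exA (- a) = (exA a)^-1.
Proof.
apply: (mulfI (ex_neq0 a)); rewrite -exD subrr ex0 divff //; exact: ex_neq0.
Qed.
Lemma exB a b : exA (a - b) = exA a / exA b.
Proof. by rewrite exD exN. Qed.
Lemma ex_muln a m : exA (a *+ m) = exA a ^+ m.
Proof. by elim: m => [|m IH]; rewrite ?mulr0n ?ex0 ?expr0 // mulrS exD IH exprS. Qed.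
Lemma ex_i z : exA (iA z) = 1.
Proof. by apply/ex_ker; exists z. Qed.

Lemma dv_ex (u : A) n : exists b : A, b *+ n.+1 == u.
Proof. by have [b hb] := @divA u n.+1 (ltn0Sn n); exists b; apply/eqP. Qed.
Definition dv (u : A) n : A := xchoose (dv_ex u n).
Lemma dvP u n : dv u n *+ n.+1 = u.
Proof. exact/eqP/(xchooseP (dv_ex u n)). Qed.
Lemma dv_uniq u n w : w *+ n.+1 = u -> w = dv u n.
Proof.
move=> hw; apply/eqP; rewrite -subr_eq0; apply/eqP/(@tfA _ n.+1) => //.
by rewrite mulrnBl hw dvP subrr.
Qed.
Lemma dv0n u : dv u 0 = u.
Proof. by apply/esym/dv_uniq. Qed.
Lemma dvD u v n : dv (u + v) n = dv u n + dv v n.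
Proof. by apply/esym/dv_uniq; rewrite mulrnDl !dvP. Qed.
Lemma dvN u n : dv (- u) n = - dv u n.
Proof. by apply/esym/dv_uniq; rewrite mulNrn dvP. Qed.
Lemma dvB u v n : dv (u - v) n = dv u n - dv v n.
Proof. by rewrite dvD dvN. Qed.
Lemma dv_mul u n : dv (u *+ n.+1) n = u.
Proof. by apply/esym/dv_uniq. Qed.
Lemma dv_mulz u k n : dv (u *~ k) n = dv u n *~ k.
Proof. by apply/esym/dv_uniq; rewrite pmulrn mulrzAC -pmulrn dvP. Qed.
Lemma dv_muln u k n : dv (u *+ k) n = dv u n *+ k.
Proof. by rewrite !pmulrn dv_mulz. Qed.
Lemma dv0 n : dv 0 n = 0.
Proof. by apply/esym/dv_uniq; rewrite mul0rn. Qed.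
Lemma dv_dv u n m : dv (dv u n) m = dv u (idx n m).
Proof. by apply/dv_uniq; rewrite idxS mulnC mulrnA !dvP. Qed.
Lemma dv_dvd u n m d : n.+1 = (d * m.+1)%N -> dv u m = dv u n *+ d.
Proof. by move=> e; apply/esym/dv_uniq; rewrite -mulrnA -e dvP. Qed.
Lemma dv_comb u k k' n n' :
  dv (u *~ k) n - dv (u *~ k') n' =
  dv (u *~ (k * n'.+1%:Z - k' * n.+1%:Z)) (idx n n').
Proof.
apply/dv_uniq; rewrite idxS mulrnBl mulrnA dvP mulnC mulrnA dvP.
by rewrite mulrzBr !mulrzA -!pmulrn.
Qed.
Lemma dvS u n : dv u n = 0 -> u = 0.
Proof. by move=> h; rewrite -(dvP u n) h mul0rn. Qed.

Lemma zmod_ex z n :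
  exA (dv (iA z) n) = exA (dv (iA (zn (absz (zhat_val z n)))) n).
Proof.
have nn : (0 <= zhat_val z n)%R by rewrite zval_mod modz_ge0.
have w0 : zhat_val (z - zn (absz (zhat_val z n))) n = 0.
  by rewrite zval_sub zval_zn gez0_abs // -zval_mod subrr mod0z.
have [v hv] := zhat_div_exists w0.
have E : z = zn (absz (zhat_val z n)) + v *+ n.+1 by rewrite hv addrC subrK.
by rewrite {1}E iD i_muln dvD dv_mul exD ex_i mulr1.
Qed.

Lemma zn_mod_ex r m :
  exA (dv (iA (zn r)) m) = exA (dv (iA (zn (r %% m.+1)%N)) m).
Proof.
rewrite {1}(divn_eq r m.+1) zn_add zn_mul iD i_muln dvD dv_mul exD.
by rewrite ex_i mul1r.
Qed.

Lemma root_ex n (c : F) : c ^+ n.+1 = 1 ->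
  exists r, (r < n.+1)%N && (exA (dv (iA (zn r)) n) == c).
Proof.
move=> hc; have c0 : c != 0.
  by apply/eqP => c0; move: hc; rewrite c0 expr0n /= => /eqP; rewrite eq_sym oner_eq0.
have [y hy] := ex_surj c0.
have : exA (y *+ n.+1) = 1 by rewrite ex_muln hy.
move=> /ex_ker [w hw].
exists (absz (zhat_val w n)); apply/andP; split.
  have := zval_mod w n; have := @ltz_pmod (zhat_val w n) n.+1 isT.
  have := modz_ge0 (zhat_val w n) (d:=n.+1%:Z) isT. lia.
by rewrite -zmod_ex hw dv_mul hy.
Qed.

Lemma root_uniq n r r' : (r < n.+1)%N -> (r' < n.+1)%N ->
  exA (dv (iA (zn r)) n) = exA (dv (iA (zn r')) n) -> r = r'.
Proof.
move=> hr hr' e.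
have : exA (dv (iA (zn r - zn r')) n) = 1.
  by rewrite iB dvB exB e divff // ex_neq0.
move=> /ex_ker [v hv].
have : v *+ n.+1 = zn r - zn r'.
  by apply: i_inj; rewrite i_muln hv dvP.
move=> /(congr1 (fun x => zhat_val x n)); rewrite zval_muln zval_sub !zval_zn.
rewrite modzMl !modz_nat !modn_small // => /esym/dvdz_mod0P. case/dvdzP => q hq; exact: (small_diff hr hr' hq).
Qed.

Lemma K1 x : (forall n, exA (dv x n) = 1) -> x = 0.
Proof.
move=> h; have [v0 hv0] := proj1 (ex_ker _) (h 0%N); rewrite dv0n in hv0.
suff e : v0 = 0 by rewrite -hv0 e i0.
apply: zhat_eq => n; rewrite zval0.
have [v hv] := proj1 (ex_ker _) (h n).
have : v *+ n.+1 = v0 by apply: i_inj; rewrite i_muln hv dvP hv0.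
by move=> <-; rewrite zval_muln modzMl.
Qed.

Lemma roots_lift (zeta : nat -> F) :
  (forall n, zeta n ^+ n.+1 = 1) ->
  (forall m n d, n.+1 = (d * m.+1)%N -> zeta n ^+ d = zeta m) ->
  exists z, forall n, exA (dv (iA z) n) = zeta n.
Proof.
move=> hz hc.
pose r n := xchoose (root_ex (hz n)).
have rP n : (r n < n.+1)%N && (exA (dv (iA (zn (r n))) n) == zeta n).
  exact: xchooseP (root_ex (hz n)).
have rlt n : (r n < n.+1)%N by case/andP: (rP n).
have rex n : exA (dv (iA (zn (r n))) n) = zeta n by case/andP: (rP n) => _ /eqP.
have comp : zhat_compat (fun n => (r n)%:Z).
  split=> [n|m n mn]; first by rewrite modz_nat modn_small.
  rewrite modz_nat; congr Posz.
  apply: (@root_uniq m) => //; first by rewrite ltn_mod.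
  have [d hd] := dvdnP mn.
  rewrite -zn_mod_ex (dv_dvd (iA (zn (r n))) hd) ex_muln !rex.
  by rewrite (hc _ _ _ hd).
exists (MkZhat comp) => n.
by rewrite zmod_ex /= rex.
Qed.

End Generic.

Local Open Scope classical_set_scope.

Section Good.
Variables (F : fieldType) (H G : zmodType) (exH : H -> F) (exG : G -> F).

Definition good (S : set (H * G)) :=
 [/\ (forall g, S (0, g) -> g = 0),
     (forall h, S (h, 0) -> h = 0),
     (forall p q, S p -> S q -> S (p.1 - q.1, p.2 - q.2)),
     (forall h g m, S (h *+ m.+1, g *+ m.+1) -> S (h, g)) &
     (forall h g, S (h, g) -> exH h = exG g)].

Lemma good_add S p q : good S -> S (0, 0) -> S p -> S q -> S (p.1 + q.1, p.2 + q.2).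
Proof.
case=> _ _ hs _ _ s0 sp sq.
have := hs _ _ s0 sq; rewrite /= !sub0r => sq'.
by have := hs _ _ sp sq'; rewrite /= !opprK.
Qed.

Lemma good_muln S h g m : good S -> S (0, 0) -> S (h, g) -> S (h *+ m, g *+ m).
Proof.
move=> gS s0 shg; elim: m => [|m IH]; first by rewrite !mulr0n.
by rewrite !mulrS; exact: (good_add gS s0 shg IH).
Qed.

Lemma good_fun S h g g' : good S -> S (h, g) -> S (h, g') -> g = g'.
Proof.
case=> z1 _ hs _ _ s1 s2; have := hs _ _ s1 s2; rewrite /= subrr => /z1 /eqP.
by rewrite subr_eq0 => /eqP.
Qed.

Lemma good_inj S h h' g : good S -> S (h, g) -> S (h', g) -> h = h'.
Proof.
case=> _ z2 hs _ _ s1 s2; have := hs _ _ s1 s2; rewrite /= subrr => /z2 /eqP.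
by rewrite subr_eq0 => /eqP.
Qed.

Lemma dom_pure (divG : divisible_group G) S x y k : good S -> S (0, 0) ->
  k != 0 -> S (x *~ k, y) -> exists y', S (x, y').
Proof.
move=> gS s0 k0; case: (gS) => _ _ hs hp _.
have gen m y0 : S (x *+ m.+1, y0) -> exists y', S (x, y').
  move=> sx; exists (dv divG y0 m); apply: (hp _ _ m).
  by rewrite dvP.
case: k k0 => [[|m]|m] // _.
  by move=> /gen.
move=> sx; have := hs _ _ s0 sx; rewrite /= !sub0r NegzE mulrNz opprK.
by move/gen.
Qed.

End Good.

Lemma good_T (F : fieldType) (H G : zmodType) (exH : H -> F) (exG : G -> F) S :
  good exH exG S -> good exG exH (fun p => S (p.2, p.1)).
Proof.
case=> z1 z2 hs hp hc; split => /=.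
- exact: z2.
- exact: z1.
- by move=> p q sp sq; exact: (hs _ _ sp sq).
- by move=> h g m; exact: hp.
- by move=> h g shg; rewrite (hc _ _ shg).
Qed.

Section Two.
Variables (F : fieldType) (H G : zmodType) (iH : Zhat -> H) (exH : H -> F)
  (iG : Zhat -> G) (exG : G -> F).
Hypotheses (sesH : ses_Zhat_units iH exH) (sesG : ses_Zhat_units iG exG)
  (divH : divisible_group H) (tfH : torsion_free_group H)
  (divG : divisible_group G) (tfG : torsion_free_group G).

Lemma ex_mulz_match x y k : exH x = exG y -> exH (x *~ k) = exG (y *~ k).
Proof.
move=> e; case: k => m.
  by rewrite -!pmulrn (ex_muln sesH) (ex_muln sesG) e.
by rewrite NegzE !mulrNz (exN sesH) (exN sesG) -!pmulrn (ex_muln sesH) (ex_muln sesG) e.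
Qed.

Lemma lift_match h : exists g, forall n, exG (dv divG g n) = exH (dv divH h n).
Proof.
have [g0 hg0] := ex_surj sesG (ex_neq0 sesH h).
pose zeta n := exH (dv divH h n) / exG (dv divG g0 n).
have hz n : zeta n ^+ n.+1 = 1.
  rewrite /zeta exprMn exprVn -(ex_muln sesH) -(ex_muln sesG) !dvP hg0.
  by rewrite divff // (ex_neq0 sesH).
have hc m n d : n.+1 = (d * m.+1)%N -> zeta n ^+ d = zeta m.
  move=> hd; rewrite /zeta exprMn exprVn -(ex_muln sesH) -(ex_muln sesG).
  by rewrite -(dv_dvd divH tfH h hd) -(dv_dvd divG tfG g0 hd).
have [z hzz] := roots_lift sesG divG tfG hz hc.
exists (g0 + iG z) => n.
rewrite (dvD divG tfG) (exD sesG) hzz /zeta mulrC divfK //.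
exact: (ex_neq0 sesG).
Qed.

Lemma extend S h : good exH exG S -> S (0, 0) -> ~ (exists g, S (h, g)) ->
  exists S', good exH exG S' /\ S `<` S'.
Proof.
move=> gS s0 nh.
have [g hg] := lift_match h.
case: (gS) => z1 z2 hs hp hc.
have gnot : forall a, ~ S (a, g).
  move=> a sag; apply: nh; exists g.
  suff -> : h = a by [].
  apply/eqP; rewrite -subr_eq0; apply/eqP.
  apply: (K1 sesH tfH) => n.
  rewrite (dvB divH tfH) (exB sesH) -hg.
  have : S (dv divH a n, dv divG g n).
    by apply: (hp _ _ n); rewrite !dvP.
  move=> /hc ->; by rewrite divff // (ex_neq0 sesG).
pose S' := fun p : H * G => exists a b k n, S (a, b) /\
   p = (a + dv divH (h *~ k) n, b + dv divG (g *~ k) n).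
have sub : S `<=` S'.
  case=> a b sab; exists a, b, 0, 0%N; split => //.
  by rewrite !mulr0z (dv0 divH tfH) (dv0 divG tfG) !addr0.
exists S'; split; last first.
  split => // ss; apply: nh; exists g; apply: ss.
  exists 0, 0, 1, 0%N; split => //.
  by rewrite !mulr1z (dv0n divH tfH) (dv0n divG tfG) !add0r.
split.
- move=> y [a [b [k [n [sab e]]]]]; case: e => e1 e2.
  have [k0|k0] := eqVneq k 0.
    move: e1 e2; rewrite k0 mulr0z (dv0 divH tfH) (dv0 divG tfG) !addr0 => e1 ->.
    by apply: z1; rewrite e1.
  exfalso; apply: nh.
  have : S (h *~ (- k), b *+ n.+1).
    have -> : h *~ (- k) = a *+ n.+1.
      have : (a + dv divH (h *~ k) n) *+ n.+1 = 0 by rewrite -e1 mul0rn.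
      rewrite mulrnDl dvP => /eqP; rewrite addr_eq0 => /eqP ->.
      by rewrite mulrNz.
    exact: good_muln gS s0 sab.
  by apply: (dom_pure divG gS s0); rewrite oppr_eq0.
- move=> x [a [b [k [n [sab e]]]]]; case: e => e1 e2.
  have [k0|k0] := eqVneq k 0.
    move: e1 e2; rewrite k0 mulr0z (dv0 divH tfH) (dv0 divG tfG) !addr0 => -> e2.
    by apply: z2; rewrite e2.
  exfalso.
  have : S (a *+ n.+1, g *~ (- k)).
    have -> : g *~ (- k) = b *+ n.+1.
      have : (b + dv divG (g *~ k) n) *+ n.+1 = 0 by rewrite -e2 mul0rn.
      rewrite mulrnDl dvP => /eqP; rewrite addr_eq0 => /eqP ->.
      by rewrite mulrNz.
    exact: good_muln gS s0 sab.
  move=> sx.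
  have k0' : - k != 0 by rewrite oppr_eq0.
  have [x' hx'] := @dom_pure F G H exG exH divH (fun p => S (p.2, p.1)) g
     (a *+ n.+1) (- k) (good_T gS) s0 k0' sx.
  by apply: gnot hx'.
- move=> p q [a [b [k [n [sab ->]]]]] [a' [b' [k' [n' [sab' ->]]]]].
  exists (a - a'), (b - b'), (k * n'.+1%:Z - k' * n.+1%:Z), (idx n n').
  split; first exact: (hs _ _ sab sab').
  rewrite !opprD (addrACA a) (addrACA b).
  by rewrite (dv_comb divH tfH h k k' n n') (dv_comb divG tfG g k k' n n').
- move=> h0 g0 m [a [b [k [n [sab e]]]]]; case: e => e1 e2.
  exists (dv divH a m), (dv divG b m), k, (idx n m); split.
    by apply: (hp _ _ m); rewrite !dvP.
  rewrite -(dv_mul divH tfH h0 m) -(dv_mul divG tfG g0 m) e1 e2.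
  by rewrite (dvD divH tfH) (dvD divG tfG) (dv_dv divH tfH) (dv_dv divG tfG).
- move=> x y [a [b [k [n [sab e]]]]]; case: e => -> ->.
  rewrite (exD sesH) (exD sesG) (hc _ _ sab) (dv_mulz divH tfH) (dv_mulz divG tfG).
  by congr (_ * _); apply: ex_mulz_match; rewrite hg.
Qed.
End Two.

Local Close Scope classical_set_scope.
Unset Implicit Arguments.

Theorem proposition3p8 (F : closedFieldType) (HF : [pchar F] =i pred0)
    (H G : zmodType)
    (iH : Zhat -> H) (exH : H -> F) (iG : Zhat -> G) (exG : G -> F)
    (sesH : ses_Zhat_units iH exH) (sesG : ses_Zhat_units iG exG)
    (divH : divisible_group H) (tfH : torsion_free_group H)
    (divG : divisible_group G) (tfG : torsion_free_group G) :
  exists sigma : H -> G,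
    [/\ (forall a b : H, sigma (a + b) = sigma a + sigma b),
        bijective sigma &
        (forall a : H, exH a = exG (sigma a))].
Proof.
have chain : forall Fm : set (set (H * G)), (Fm `<=` good exH exG)%classic ->
    total_on Fm subset -> good exH exG (\bigcup_(X in Fm) X)%classic.
  move=> Fm FP tot; split.
  - move=> g [X FX sX]; case: (FP X FX) => z1 _ _ _ _; exact: z1.
  - move=> h [X FX sX]; case: (FP X FX) => _ z2 _ _ _; exact: z2.
  - move=> p q [X FX sXp] [Y FY sYq].
    have [XY|YX] := tot X Y FX FY.
      exists Y => //; case: (FP Y FY) => _ _ hs _ _; apply: hs => //; exact: XY.
    exists X => //; case: (FP X FX) => _ _ hs _ _; apply: hs => //; exact: YX.
  - move=> h g m [X FX sX]; exists X => //; case: (FP X FX) => _ _ _ hp _.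
    exact: hp sX.
  - move=> h g [X FX sX]; case: (FP X FX) => _ _ _ _ hc; exact: hc.
have [S [gS maxS]] := Zorn_bigcup chain.
have s0 : S (0, 0).
  apply: contrapT => ns0.
  apply: (maxS (fun p => p = (0, 0))).
    split.
      move=> x Sx; exfalso; apply: ns0; case: gS => _ _ hs _ _.
      by have := hs _ _ Sx Sx; rewrite !subrr.
    by move=> hh; apply: ns0; exact: hh.
  split.
  - by move=> g [].
  - by move=> h [].
  - by move=> p q -> -> /=; rewrite !subrr.
  - move=> h g m [e1 e2].
    by rewrite (@tfH h m.+1 (ltn0Sn m) e1) (@tfG g m.+1 (ltn0Sn m) e2).
  - by move=> h g [-> ->]; rewrite (ex0 sesH) (ex0 sesG).
have totH : forall h, exists g, S (h, g).
  move=> h; apply: contrapT => nh.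
  have [S' [gS' pS']] := extend sesH sesG divH tfH divG tfG gS s0 nh.
  exact: maxS pS' gS'.
have totG : forall g, exists h, S (h, g).
  move=> g; apply: contrapT => ng.
  have [S' [gS' [sub nsub]]] :=
    extend sesG sesH divG tfG divH tfH (good_T gS) s0 ng.
  apply: (maxS (fun p => S' (p.2, p.1))); last exact: good_T gS'.
  split.
    by move=> [x y] sxy; exact: sub (y, x) sxy.
  by move=> hh; apply: nsub => [[y x]] sxy; exact: hh (x, y) sxy.
pose sigma h := proj1_sig (cid (totH h)).
pose tau g := proj1_sig (cid (totG g)).
have sS h : S (h, sigma h) := proj2_sig (cid (totH h)).
have tS g : S (tau g, g) := proj2_sig (cid (totG g)).
exists sigma; split.
- move=> a b; apply: (good_fun gS (sS (a + b))).
  exact: (good_add gS s0 (sS a) (sS b)).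
- exists tau.
    by move=> h; apply: (good_inj gS (tS (sigma h)) (sS h)).
  by move=> g; apply: (good_fun gS (sS (tau g)) (tS g)).
- by move=> h; case: gS => _ _ _ _ hc; exact: hc _ _ (sS h).
Qed.
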